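(* Let $n\ge 1$ and $q>1$. Any optimal strategy (one of maximum success probability) for the New Hats-on-a-line Game with $q$ hat colours and $n$ players is a restricted strategy.
   Context: The New Hats-on-a-line Game with $q$ colours and $n$ players: players $P_1,\dots,P_n$ stand in a line, and each player $P_i$ receives a hat whose colour $c_i$ is chosen uniformly at random from a fixed set of $q$ colours, independently of the other hats. Player $P_i$ sees exactly the hat colours $c_{i+1},\dots,c_n$. The players respond sequentially in the order $P_1,\dots,P_n$; each response is either a colour (a guess of one's own hat colour) or ''pass'', and each player hears all previous responses. No other communication is allowed, apart from agreeing on a strategy beforehand. A strategy specifies (deterministically), for each player $P_i$, his response as a function of the colours he sees and the responses he has heard. The players win if at least one player guesses correctly and no player guesses incorrectly; the success probability of a strategy is the probability that the players win. A strategy is restricted if, for every configuration of hats $(c_1,\dots,c_n)$, any guess made by a player other than $P_1$ is correct. *)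

(* Defs.v *)
From mathcomp Require Import all_boot all_order all_algebra.
Set Implicit Arguments. Unset Strict Implicit. Unset Printing Implicit Defensive.
Import GRing.Theory Num.Theory.

(* Hat configurations: player i (0-indexed, P_1 is index 0) wears colour c i. *)
Definition config (n q : nat) := {ffun 'I_n -> 'I_q}.

(* A response: Some k = guess colour k, None = pass. *)
Definition response (q : nat) := option 'I_q.

(* A (deterministic) strategy: player i's response as a function of the hat
   configuration and the sequence of responses heard so far (responses of
   players 0..i-1, in order).  Admissibility below forces the dependence on
   the configuration to be only through the hats player i sees. *)
Definition strategy (n q : nat) := 'I_n -> config n q -> seq (response q) -> response q.

Definition admissible n q (s : strategy n q) : Prop :=
  forall (i : 'I_n) (c c' : config n q) (h : seq (response q)),
    (forall j : 'I_n, i < j -> c j = c' j) -> s i c h = s i c' h.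

Fixpoint history n q (s : strategy n q) (c : config n q) (k : nat) : seq (response q) :=
  match k with
  | 0 => [::]
  | k'.+1 =>
      let h := history s c k' in
      match insub k' with
      | Some i => rcons h (s i c h)
      | None => h
      end
  end.

Definition resp n q (s : strategy n q) (c : config n q) (i : 'I_n) : response q :=
  nth None (history s c n) i.

Definition wins n q (s : strategy n q) (c : config n q) : bool :=
  [exists i, resp s c i == Some (c i)] &&
  [forall i, (resp s c i != None) ==> (resp s c i == Some (c i))].

Definition success_prob n q (s : strategy n q) : rat :=
  (#|[set c : config n q | wins s c]|%:R / (#|{: config n q}|)%:R)%R.

Definition optimal n q (s : strategy n q) : Prop :=
  admissible s /\
  forall s' : strategy n q, admissible s' -> (success_prob s' <= success_prob s)%R.

Definition restricted n q (s : strategy n q) : Prop :=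
  forall (c : config n q) (i : 'I_n), 0 < i -> resp s c i != None ->
    resp s c i = Some (c i).

(* Main.v *)
Require Import Defs.
From mathcomp Require Import all_boot all_order all_algebra.
Set Implicit Arguments. Unset Strict Implicit. Unset Printing Implicit Defensive.

Lemma history_S n q (s : strategy n q) c k (Hk : k < n) :
  history s c k.+1 = rcons (history s c k) (s (Ordinal Hk) c (history s c k)).
Proof.
rewrite /=; case: insubP => [i _ Hi|]; last by rewrite Hk.
by congr (rcons _ (s _ _ _)); apply: val_inj.
Qed.

Lemma size_history n q (s : strategy n q) c k : k <= n -> size (history s c k) = k.
Proof.
elim: k => // k IH Hk; rewrite (@history_S _ _ s c _ Hk) size_rcons IH //.
exact: ltnW.
Qed.

Lemma nth_history n q (s : strategy n q) c k (i : 'I_n) :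
  i < k -> k <= n -> nth None (history s c k) i = s i c (history s c i).
Proof.
elim: k => // k IH Hi Hk.
rewrite (@history_S _ _ s c _ Hk) nth_rcons size_history; last exact: ltnW.
have [lt|eq|gt] := ltngtP i k.
- by rewrite (IH lt (ltnW Hk)).
- by rewrite ltnS leqNgt eq in Hi.
- by rewrite gt; congr s; apply: val_inj.
Qed.

Lemma hist_eq n q (s1 s2 : strategy n q) c1 c2 :
  (forall i : 'I_n, s1 i c1 (history s1 c1 i) = s2 i c2 (history s1 c1 i)) ->
  forall k, history s1 c1 k = history s2 c2 k.
Proof.
move=> H; elim=> //= k IH; case: insubP => [i _ Hi|_]; last by rewrite IH.
by rewrite -IH -Hi H.
Qed.

Import GRing.Theory Num.Theory.

Lemma resp_hist n q (s : strategy n q) c (i : 'I_n) :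
  resp s c i = s i c (history s c i).
Proof. by rewrite /resp (nth_history s c (ltn_ord i) (leqnn n)). Qed.

Lemma hist_head n q (s : strategy n.+1 q) c k :
  0 < k -> k <= n.+1 -> nth None (history s c k) 0 = s ord0 c [::].
Proof. by move=> H1 H2; rewrite (@nth_history _ _ s c k ord0 H1 H2). Qed.

Definition sN n q (s : strategy n q) : strategy n q :=
  fun i c h => if i == 0 :> nat then None else s i c h.

Definition sP n q (s : strategy n q) (x0 : 'I_q) : strategy n q :=
  fun i c h => if i == 0 :> nat then
     (if wins (sN s) c then None else Some (odflt x0 (s i c [::])))
   else (if nth None h 0 is None then s i c h else None).

Lemma A1 n q (s : strategy n.+1 q) (c c' : config n.+1 q) : admissible s ->
  (forall j : 'I_n.+1, 0 < j -> c j = c' j) -> wins (sN s) c = wins (sN s) c'.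
Proof.
move=> adm agr.
have Eh : forall k, history (sN s) c k = history (sN s) c' k.
  apply: hist_eq => i; rewrite /sN; case: eqP => // /eqP i0.
  apply: adm => j ij; apply: agr; apply: leq_ltn_trans ij.
  by [].
rewrite /wins /resp Eh; congr andb.
  apply: eq_existsb => i; have [i0|ipos] := posnP i.
    by rewrite (_ : nth _ _ _ = resp (sN s) c' i) // resp_hist /sN i0.
  by rewrite agr.
apply: eq_forallb => i; have [i0|ipos] := posnP i.
  by rewrite (_ : nth _ _ _ = resp (sN s) c' i) // resp_hist /sN i0.
by rewrite agr.
Qed.

Lemma A2 n q (s : strategy n.+1 q) (c c' : config n.+1 q) : admissible s ->
  (forall j : 'I_n.+1, 0 < j -> c j = c' j) -> forall k, history s c k = history s c' k.
Proof.
move=> adm agr; apply: hist_eq => i; apply: adm => j ij; apply: agr.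
exact: leq_ltn_trans ij.
Qed.

Lemma caseA n q (s : strategy n.+1 q) x0 c :
  wins (sN s) c -> wins (sP s x0) c.
Proof.
move=> W.
have Eh : forall k, history (sN s) c k = history (sP s x0) c k.
  apply: hist_eq => i; rewrite /sN /sP W; case: eqP => // /eqP i0.
  rewrite hist_head; [by [] | by rewrite lt0n | exact: ltnW].
by move: W; rewrite /wins /resp Eh.
Qed.

Lemma caseB n q (s : strategy n.+1 q) x0 c :
  ~~ wins (sN s) c -> wins (sP s x0) c = (odflt x0 (s ord0 c [::]) == c ord0).
Proof.
move=> W.
have R : forall i : 'I_n.+1, resp (sP s x0) c i =
    if i == 0 :> nat then Some (odflt x0 (s ord0 c [::])) else None.
  move=> i; rewrite resp_hist /sP (negbTE W); case: eqP => [i0|/eqP i0].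
    by have -> : i = ord0 by apply: val_inj.
  rewrite hist_head; [by rewrite /= (negbTE W) | by rewrite lt0n | exact: ltnW].
rewrite /wins; apply/idP/idP.
  case/andP => /existsP [i]; rewrite R; have [i0|i0] := eqVneq (i : nat) 0 => // /eqP [E] _.
  have Ei : i = ord0 by apply: val_inj.
  by rewrite E Ei.
move=> /eqP E; apply/andP; split.
  by apply/existsP; exists ord0; rewrite R /= E.
apply/forallP => i; rewrite R; have [i0|i0] := eqVneq (i : nat) 0 => //=.
have -> : i = ord0 by apply: val_inj.
by rewrite E.
Qed.

Lemma sP_adm n q (s : strategy n.+1 q) x0 : admissible s -> admissible (sP s x0).
Proof.
move=> adm i c c' h agr; rewrite /sP; case: eqP => [i0|_].
  rewrite (@A1 _ _ s c c') //; last first.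
    by move=> j j0; apply: agr; rewrite i0.
  by rewrite (adm i c c').
by rewrite (adm i c c' h agr).
Qed.

Lemma claim1 n q (s : strategy n.+1 q) x0 c :
  wins s c -> wins (sP s x0) c.
Proof.
move=> W.
case E: (s ord0 c [::]) => [g|].
  have [WN|WN] := boolP (wins (sN s) c); first exact: caseA.
  rewrite caseB // E /=.
  move: W; rewrite /wins => /andP [_ /forallP /(_ ord0)].
  rewrite resp_hist /= E /=.
  by move/eqP => [->].
apply: caseA.
have Eh : forall k, history s c k = history (sN s) c k.
  apply: hist_eq => i; rewrite /sN; case: eqP => // /eqP i0.
  have -> : i = ord0 by apply: val_inj; apply/eqP.
  by rewrite /= E.
by move: W; rewrite /wins /resp Eh.
Qed.

Theorem lemma4 (n q : nat) (hn : 1 <= n) (hq : 1 < q) (s : strategy n q) :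
  optimal s -> restricted s.
Proof.
case: n hn s => [//|n] _ s.
have x0 : 'I_q := Ordinal (ltnW hq).
move=> [adm opt] c i ipos Hne; apply/eqP; apply: contraT => Hbad.
have notwin : forall c'' : config n.+1 q,
    (forall j : 'I_n.+1, 0 < j -> c'' j = c j) -> ~~ wins s c''.
  move=> c'' agr; apply/negP; rewrite /wins => /andP [_ /forallP /(_ i)].
  rewrite /resp (A2 adm agr) -/(resp s c i) Hne /= agr //.
  by rewrite (negbTE Hbad).
have [c' [W1 W2]] : exists c' : config n.+1 q, wins (sP s x0) c' /\ ~~ wins s c'.
  have [WN|WN] := boolP (wins (sN s) c).
    by exists c; split; [exact: caseA | exact: notwin].
  pose g := odflt x0 (s ord0 c [::]).
  exists [ffun j : 'I_n.+1 => if j == ord0 then g else c j].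
  have agr : forall j : 'I_n.+1, 0 < j ->
      [ffun j : 'I_n.+1 => if j == ord0 then g else c j] j = c j.
    move=> j j0; rewrite ffunE; case: eqP => // E; by rewrite E in j0.
  split; last exact: notwin.
  rewrite caseB; last by rewrite (A1 adm agr).
  rewrite ffunE eqxx (adm ord0 _ c) //.
have Hlt : #|[set c | wins s c]| < #|[set c | wins (sP s x0) c]|.
  apply: proper_card; apply/properP; split.
    by apply/subsetP => x; rewrite !inE; exact: claim1.
  by exists c'; rewrite inE // inE.
have := opt _ (sP_adm x0 adm); rewrite /success_prob.
rewrite ler_pM2r ?invr_gt0 ?ltr0n ?card_gt0 //.
  by rewrite ler_nat leqNgt Hlt.
by apply/card_gt0P; exists c.
Qed.
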